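(* Let $d\ge2$, $1\le r_p\le n_p$, let $f$ be a real-valued function differentiable on an open neighbourhood of $\Omega=\mathrm{St}(r_1,n_1,\mathbb{C})\times\cdots\times\mathrm{St}(r_d,n_d,\mathbb{C})$, and let $\tilde f=f\circ\rho$, where $\rho$ keeps the first $r_p$ columns of the $p$-th component. Let $\upsilon\in\Upsilon=\mathcal{U}_{n_1}\times\cdots\times\mathcal{U}_{n_d}$ and $\omega=\rho(\upsilon)\in\Omega$. Then $\operatorname{grad}\tilde f(\upsilon)=0$ if and only if $\operatorname{grad}f(\omega)=0$.
   Context: $\mathrm{St}(r,n,\mathbb{C})=\{X\in\mathbb{C}^{n\times r}:X^HX=I_r\}$, $\mathcal{U}_n=\mathrm{St}(n,n,\mathbb{C})$. Matrix spaces carry the real inner product $\mathrm{Re}\,\mathrm{tr}(X^HY)$, Euclidean gradient $\nabla F=\partial F/\partial X^{\Re}+\mathrm{i}\,\partial F/\partial X^{\Im}$, $\mathrm{skew}(P)=\frac12(P-P^H)$. For $g$ on a Stiefel manifold, $\operatorname{grad}g(X)=(I_n-XX^H)\nabla g(X)+X\,\mathrm{skew}(X^H\nabla g(X))$. For $\omega=(X^{(1)},\dots,X^{(d)})$, $\operatorname{grad}f(\omega)=(\operatorname{grad}g_{(1)}(X^{(1)}),\dots,\operatorname{grad}g_{(d)}(X^{(d)}))$, where $g_{(p)}$ is $f$ as a function of the $p$-th component with the others fixed; $\operatorname{grad}\tilde f(\upsilon)$ is defined in the same way blockwise on $\Upsilon$. *)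

(* Defs.v *)
From HB Require Import structures.
From mathcomp Require Import all_boot all_order all_algebra.
From mathcomp Require Import all_classical all_reals.
From mathcomp Require Import topology normedtype derive.
From mathcomp Require Import complex.
Set Implicit Arguments. Unset Strict Implicit. Unset Printing Implicit Defensive.
Import Order.TTheory GRing.Theory Num.Theory numFieldNormedType.Exports.
Local Open Scope ring_scope.

Section Defs.
Variable R : realType.
Local Notation C := (R[i]).

Definition cconj (z : C) : C := @Complex R (@complex.Re R z) (- @complex.Im R z).
Definition ctr m n (A : 'M[C]_(m, n)) : 'M[C]_(n, m) := (map_mx cconj A)^T.
Definition skew n (P : 'M[C]_n) : 'M[C]_n := (2%:R : C)^-1 *: (P - ctr P).

Definition Stiefel (r n : nat) : set 'M[C]_(n, r) :=
  [set X | ctr X *m X = 1%:M].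

Definition amb (d : nat) (m k : 'I_d -> nat) := forall q : 'I_d, 'M[C]_(m q, k q).

Definition amb_add {d : nat} (m k : 'I_d -> nat) (x y : amb m k) : amb m k := fun q => x q + y q.
Definition amb_opp {d : nat} (m k : 'I_d -> nat) (x : amb m k) : amb m k := fun q => - x q.
Definition amb_scale {d : nat} (m k : 'I_d -> nat) (a : R) (x : amb m k) : amb m k := fun q => (a%:C)%C *: x q.

Definition amb_norm {d : nat} (m k : 'I_d -> nat) (x : amb m k) : R :=
  \sum_(q < d) \sum_(a < m q) \sum_(b < k q)
     (`|@complex.Re R (x q a b)| + `|@complex.Im R (x q a b)|).

Definition amb_open {d : nat} (m k : 'I_d -> nat) (U : set (amb m k)) :=
  forall x, U x -> exists2 e : R, 0 < e &
    forall y, amb_norm (amb_add y (amb_opp x)) < e -> U y.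

Definition amb_differentiable_at {d : nat} (m k : 'I_d -> nat) (F : amb m k -> R) (x : amb m k) :=
  exists L : amb m k -> R,
    (forall (a : R) (h1 h2 : amb m k),
        L (amb_add (amb_scale a h1) h2) = a * L h1 + L h2) /\
    (forall eps : R, 0 < eps -> exists2 del : R, 0 < del &
       forall h : amb m k, amb_norm h < del ->
         `|F (amb_add x h) - F x - L h| <= eps * amb_norm h).

Definition amb_dir {d : nat} (m k : 'I_d -> nat) (p : 'I_d) (i j : nat) (c : C) : amb m k :=
  fun q => \matrix_(a, b)
    (if [&& q == p, nat_of_ord a == i & nat_of_ord b == j] then c else 0).

(* Euclidean gradient of g_(p) : X^(p) |-> F(..., X^(p), ...) :
   dF/dX^Re + i dF/dX^Im, entrywise *)
Definition egrad {d : nat} (m k : 'I_d -> nat) (F : amb m k -> R) (x : amb m k) (p : 'I_d) :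
    'M[C]_(m p, k p) :=
  \matrix_(a, b)
    (((derive1 (fun t : R => F (amb_add x (amb_scale t (amb_dir m k p a b 1)))) 0)%:C)%C
     + (('i)%C * ((derive1 (fun t : R =>
           F (amb_add x (amb_scale t (amb_dir m k p a b ('i)%C))))) 0)%:C)%C).

(* Riemannian gradient on a Stiefel manifold:
   grad g(X) = (I - X X^H) G + X skew(X^H G), with G the Euclidean gradient *)
Definition stgrad n r (X G : 'M[C]_(n, r)) : 'M[C]_(n, r) :=
  (1%:M - X *m ctr X) *m G + X *m skew (ctr X *m G).

Definition pgrad {d : nat} (m k : 'I_d -> nat) (F : amb m k -> R) (x : amb m k) : amb m k :=
  fun p => stgrad (x p) (egrad F x p).

Definition rho {d : nat} (n r : 'I_d -> nat) (hr : forall q, (r q <= n q)%N)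
    (u : amb n n) : amb n r :=
  fun q => \matrix_(a, b) u q a (widen_ord (hr q) b).

End Defs.
Arguments Stiefel {R} r n.

(* Main.v *)
Require Import Defs.
From HB Require Import structures.
From mathcomp Require Import all_boot all_order all_algebra.
From mathcomp Require Import all_classical all_reals.
From mathcomp Require Import topology normedtype derive.
From mathcomp Require Import complex.
Import Order.TTheory GRing.Theory Num.Theory.
Local Open Scope ring_scope.

Section Alg.
Variable R : realType.
Local Notation C := (R[i]).

Lemma cconjE (z : C) : cconj z = conjc z.
Proof. by case: z. Qed.

Lemma ctrE m n (A : 'M[C]_(m, n)) : ctr A = (map_mx conjc A)^T.
Proof. by apply/matrixP => i j; rewrite !mxE cconjE. Qed.

Lemma ctr_mul m n p (A : 'M[C]_(m, n)) (B : 'M[C]_(n, p)) :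
  ctr (A *m B) = ctr B *m ctr A.
Proof. by rewrite !ctrE map_mxM trmx_mul. Qed.

Lemma ctrK m n (A : 'M[C]_(m, n)) : ctr (ctr A) = A.
Proof. by apply/matrixP => i j; rewrite !ctrE !mxE conjcK. Qed.

Lemma ctrB m n (A B : 'M[C]_(m, n)) : ctr (A - B) = ctr A - ctr B.
Proof. by rewrite !ctrE map_mxB linearB. Qed.

Lemma skew0P n (P : 'M[C]_n) : Defs.skew P = 0 <-> ctr P = P.
Proof.
rewrite /Defs.skew; split.
  move=> /eqP; rewrite scaler_eq0 invr_eq0.
  have -> : ((2%:R : C) == 0) = false by rewrite pnatr_eq0.
  by rewrite orFb subr_eq0 => /eqP h; rewrite -h.
by move=> ->; rewrite subrr scaler0.
Qed.

Lemma key n r (E M : 'M[C]_(n, r)) (hE : ctr E *m E = 1%:M) :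
  Defs.skew (M *m ctr E) = 0 <->
  (1%:M - E *m ctr E) *m M + E *m Defs.skew (ctr E *m M) = 0.
Proof.
rewrite skew0P ctr_mul ctrK; split => [h|h].
  have hM : M = E *m ctr M *m E by rewrite h -mulmxA hE mulmx1.
  have hS : Defs.skew (ctr E *m M) = 0.
    apply/skew0P; rewrite ctr_mul ctrK.
    by rewrite {2}hM !mulmxA hE mul1mx.
  rewrite hS mulmx0 addr0 mulmxBl mul1mx.
  by rewrite {2}hM !mulmxA -(mulmxA E) hE mulmx1 -hM subrr.
have hS : Defs.skew (ctr E *m M) = 0.
  move: (congr1 (mulmx (ctr E)) h).
  rewrite mulmx0 mulmxDr !mulmxA mulmxBr mulmx1 mulmxA hE !mul1mx subrr.
  by rewrite mul0mx add0r.
move: h; rewrite hS mulmx0 addr0 mulmxBl mul1mx => /eqP; rewrite subr_eq0 => /eqP hM.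
move/skew0P: hS; rewrite ctr_mul ctrK => hS.
have hMh : ctr M = ctr M *m E *m ctr E.
  by rewrite {1}hM ctr_mul ctr_mul ctrK mulmxA.
by rewrite hMh hS !mulmxA -hM.
Qed.

Lemma unit_mul0 n r (U : 'M[C]_n) (X : 'M[C]_(n, r)) (hU : ctr U *m U = 1%:M) :
  U *m X = 0 <-> X = 0.
Proof.
split=> [h|->]; last by rewrite mulmx0.
by rewrite -[X]mul1mx -hU -mulmxA h mulmx0.
Qed.

Lemma stg n r (U : 'M[C]_n) (E G : 'M[C]_(n, r)) (hU : ctr U *m U = 1%:M)
  (hE : ctr E *m E = 1%:M) :
  stgrad U (G *m ctr E) = 0 <-> stgrad (U *m E) G = 0.
Proof.
have hU' : U *m ctr U = 1%:M by apply: mulmx1C.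
have e1 : stgrad U (G *m ctr E) = U *m Defs.skew ((ctr U *m G) *m ctr E).
  by rewrite /stgrad hU' subrr mul0mx add0r !mulmxA.
have e2 : stgrad (U *m E) G = U *m ((1%:M - E *m ctr E) *m (ctr U *m G)
            + E *m Defs.skew (ctr E *m (ctr U *m G))).
  rewrite /stgrad ctr_mul mulmxDr !mulmxA mulmxBr mulmx1 mulmxBl mulmxBl hU' !mulmxA.
  by rewrite mulmxBl.
rewrite e1 e2 !unit_mul0 //; exact: key.
Qed.

Lemma rho_dir d (n r : 'I_d -> nat) (hr : forall q, (r q <= n q)%N) (u : amb R n n)
  p (i j : nat) c t :
  rho hr (amb_add u (amb_scale t (amb_dir n n p i j c))) =
  amb_add (rho hr u) (amb_scale t (amb_dir n r p i j c)).
Proof. by apply: functional_extensionality_dep => q; apply/matrixP => a b; rewrite !mxE. Qed.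

Lemma dir_out d (n r : 'I_d -> nat) p (i j : nat) (c : C) (hj : (r p <= j)%N) :
  amb_dir n r p i j c = (fun q => 0 : 'M[C]_(n q, r q)).
Proof.
apply: functional_extensionality_dep => q; apply/matrixP => a b; rewrite !mxE.
case: eqP => //= eqq; subst q.
by rewrite (ltn_eqF (leq_trans (ltn_ord b) hj)) andbF.
Qed.

Definition Esel n r (h : (r <= n)%N) : 'M[C]_(n, r) :=
  \matrix_(i, j) ((nat_of_ord i == nat_of_ord (widen_ord h j))%:R).

Lemma ctrEsel n r h i j : ctr (@Esel n r h) i j = ((nat_of_ord j == nat_of_ord i)%:R).
Proof. by rewrite ctrE !mxE rmorph_nat. Qed.

Lemma Esel_unit n r h : ctr (@Esel n r h) *m @Esel n r h = 1%:M.
Proof.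
apply/matrixP => i j; rewrite !mxE (bigD1 (widen_ord h i)) //= big1.
  rewrite ctrEsel mxE eqxx mul1r addr0 /=.
  by case: i j => [i ?] [j ?].
move=> k hk; rewrite ctrEsel mxE.
have -> : (nat_of_ord k == i) = false.
  by apply/negbTE; apply: contra hk => /eqP hk'; apply/eqP; apply: val_inj.
by rewrite mul0r.
Qed.

Lemma mul_Esel n r h (U : 'M[C]_n) : U *m @Esel n r h = \matrix_(a, b) U a (widen_ord h b).
Proof.
apply/matrixP => i j; rewrite !mxE (bigD1 (widen_ord h j)) //= big1.
  by rewrite mxE eqxx mulr1 addr0.
move=> k hk; rewrite mxE.
have -> : (nat_of_ord k == j) = false.
  by apply/negbTE; apply: contra hk => /eqP hk'; apply/eqP; apply: val_inj.
by rewrite mulr0.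
Qed.

Lemma egrad_tilde d (n r : 'I_d -> nat) (hr : forall q, (r q <= n q)%N)
  (f : amb R n r -> R) (ups : amb R n n) p :
  egrad (fun u : amb R n n => f (rho hr u)) ups p =
  egrad f (rho hr ups) p *m ctr (@Esel (n p) (r p) (hr p)).
Proof.
apply/matrixP => a b.
have h (c : C) : (fun t : R => f (rho hr (amb_add ups (amb_scale t (amb_dir n n p a b c))))) =
    (fun t => f (amb_add (rho hr ups) (amb_scale t (amb_dir n r p a b c)))).
  by apply: funext => t; rewrite rho_dir.
rewrite [LHS]mxE h h [RHS]mxE.
case: (ltnP b (r p)) => hb.
  rewrite (bigD1 (Ordinal hb)) //= big1 ?addr0.
    by rewrite ctrEsel eqxx mulr1 mxE.
  move=> k hk; rewrite ctrEsel.
  have -> : (nat_of_ord b == nat_of_ord k) = false.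
    by apply/negbTE; apply: contra hk => /eqP hk'; apply/eqP; apply: val_inj; rewrite /= hk'.
  by rewrite mulr0.
rewrite big1; last by move=> k _; rewrite ctrEsel (gtn_eqF (leq_trans (ltn_ord k) hb)) mulr0.
rewrite !dir_out //.
have hc : (fun t : R => f (amb_add (rho hr ups) (amb_scale t (fun q => 0 : 'M[C]_(n q, r q)))))
   = cst (f (rho hr ups)).
  apply: funext => t /=; congr f; apply: functional_extensionality_dep => q.
  by rewrite /amb_add /amb_scale scaler0 addr0.
rewrite hc derive1_cst.
by rewrite mulr0 addr0.
Qed.

Lemma main_aux (d : nat) (n r : 'I_d -> nat)
  (hd : (2 <= d)%N)
  (hr1 : forall p, (1 <= r p)%N) (hr : forall p, (r p <= n p)%N)
  (f : amb R n r -> R) (U : set (amb R n r))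
  (hUopen : amb_open U)
  (hOmegaU : forall w : amb R n r, (forall p, Stiefel (r p) (n p) (w p)) -> U w)
  (hfdiff : forall w, U w -> amb_differentiable_at f w)
  (ups : amb R n n) (hups : forall p, Stiefel (n p) (n p) (ups p)) :
  let ftilde := fun u : amb R n n => f (rho hr u) in
  let omega := rho hr ups in
  (forall p, pgrad ftilde ups p = 0) <-> (forall p, pgrad f omega p = 0).
Proof.
move=> ftilde omega.
have key p : pgrad ftilde ups p = 0 <-> pgrad f omega p = 0.
  rewrite /pgrad /ftilde egrad_tilde.
  have -> : omega p = ups p *m @Esel (n p) (r p) (hr p).
    by rewrite mul_Esel /omega /rho.
  apply: stg; [exact: hups | exact: Esel_unit].
by split => h p; apply/key.
Qed.
End Alg.

Theorem corollary2p8 (R : realType) (d : nat) (n r : 'I_d -> nat)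
  (hd : (2 <= d)%N)
  (hr1 : forall p, (1 <= r p)%N) (hr : forall p, (r p <= n p)%N)
  (f : amb R n r -> R) (U : set (amb R n r))
  (hUopen : amb_open U)
  (hOmegaU : forall w : amb R n r, (forall p, Stiefel (r p) (n p) (w p)) -> U w)
  (hfdiff : forall w, U w -> amb_differentiable_at f w)
  (ups : amb R n n) (hups : forall p, Stiefel (n p) (n p) (ups p)) :
  let ftilde := fun u : amb R n n => f (rho hr u) in
  let omega := rho hr ups in
  (forall p, pgrad ftilde ups p = 0) <-> (forall p, pgrad f omega p = 0).
Proof. exact: (@main_aux R d n r hd hr1 hr f U hUopen hOmegaU hfdiff ups hups). Qed.
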